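(* The 2D incompressible Euler equations $$\mathbf{u}_t+\mathbf{u}\cdot\nabla\mathbf{u}=-\nabla p,\qquad\nabla\cdot\mathbf{u}=0$$ subject to periodic boundary conditions on $\mathbb{T}^2$ do not possess the finitely many determining modes property in $H$; that is, there is no positive integer $M$ such that for any two solutions $\mathbf{u}_1,\mathbf{u}_2$ (with initial data in $V^3$), $\lim_{t\to\infty}\|P_M(\mathbf{u}_1(t)-\mathbf{u}_2(t))\|_H=0$ implies $\lim_{t\to\infty}\|\mathbf{u}_1(t)-\mathbf{u}_2(t)\|_H=0$.
   Context: $\mathbb{T}^2=[0,2\pi)^2$. Let $\mathcal{V}$ be the set of $\mathbb{R}^2$-valued $2\pi$-periodic trigonometric polynomials $\varphi$ with $\nabla\cdot\varphi=0$ and $\int_{\mathbb{T}^2}\varphi=0$; $H$ is the closure of $\mathcal{V}$ in $L^2$, $V^s$ its closure in the $H^s$ seminorm. $P_M$ is the projection onto the Fourier modes $\mathbf{n}\in\mathbb{Z}^2\setminus\{(0,0)\}$ with $|\mathbf{n}|\le M$. For data in $V^s$, $s\ge3$, the Euler equations are globally well-posed with unique solutions in $C([0,T];V^s)$ and conserve the $H$ norm. *)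

(* Defs.v *)
From Stdlib Require Import Reals ZArith List Lra.
From Coquelicot Require Import Coquelicot.
Open Scope R_scope.

(* A (time-independent) planar vector field on T^2, given by a
   2*pi-periodic representative  (x,y) |-> (u1(x,y), u2(x,y)). *)
Definition field := R -> R -> R * R.
Definition flow := R -> field.
Definition sflow := R -> R -> R -> R.

Definition comp1 (w : field) : R -> R -> R := fun x y => fst (w x y).
Definition comp2 (w : field) : R -> R -> R := fun x y => snd (w x y).

Definition dint (f : R -> R -> R) : R :=
  RInt (fun x => RInt (fun y => f x y) 0 (2 * PI)) 0 (2 * PI).

Definition Hnorm (w : field) : R :=
  sqrt (dint (fun x y => (comp1 w x y) ^ 2 + (comp2 w x y) ^ 2)).

Definition fsub (w v : field) : field :=
  fun x y => (fst (w x y) - fst (v x y), snd (w x y) - snd (v x y)).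

Definition dx (f : R -> R -> R) (x y : R) : R := Derive (fun a => f a y) x.
Definition dy (f : R -> R -> R) (x y : R) : R := Derive (fun b => f x b) y.

Definition Zbox (N : nat) : list Z :=
  map (fun k => (Z.of_nat k - Z.of_nat N)%Z) (seq 0 (2 * N + 1)).

Definition sum_box (N : nat) (F : Z -> Z -> R) : R :=
  fold_right Rplus 0
    (map (fun n1 => fold_right Rplus 0 (map (fun n2 => F n1 n2) (Zbox N))) (Zbox N)).

(* P_M: projection onto Fourier modes n in Z^2 \ {0} with |n| <= M.
   Written in real form:  sum_n  hat w_n e^{i n.x}
     = (1/(4 pi^2)) sum_n  int w(xi,eta) cos(n1 (x - xi) + n2 (y - eta)). *)
Definition PM_scalar (M : nat) (f : R -> R -> R) : R -> R -> R :=
  fun x y =>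
    sum_box M (fun n1 n2 =>
      if ((0 <? n1 * n1 + n2 * n2)%Z && (n1 * n1 + n2 * n2 <=? Z.of_nat M * Z.of_nat M)%Z)%bool
      then / (4 * PI ^ 2) *
           dint (fun a b => f a b * cos (IZR n1 * (x - a) + IZR n2 * (y - b)))
      else 0).

Definition PM (M : nat) (w : field) : field :=
  fun x y => (PM_scalar M (comp1 w) x y, PM_scalar M (comp2 w) x y).

(* |hat f_n|^2 for the Fourier coefficient hat f_n = (1/4pi^2) int f e^{-i n.x} *)
Definition fc_sq (f : R -> R -> R) (n1 n2 : Z) : R :=
  ((dint (fun x y => f x y * cos (IZR n1 * x + IZR n2 * y))) ^ 2 +
   (dint (fun x y => f x y * sin (IZR n1 * x + IZR n2 * y))) ^ 2) / (4 * PI ^ 2) ^ 2.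

Definition H3_partial (w : field) (N : nat) : R :=
  sum_box N (fun n1 n2 =>
    (IZR (n1 * n1 + n2 * n2)) ^ 3 * (fc_sq (comp1 w) n1 n2 + fc_sq (comp2 w) n1 n2)).

Definition periodic (f : R -> R -> R) : Prop :=
  forall x y, f (x + 2 * PI) y = f x y /\ f x (y + 2 * PI) = f x y.

Definition jcont (f : R -> R -> R) : Prop :=
  forall x y, continuous (fun q : R * R => f (fst q) (snd q)) (x, y).

Definition C1 (f : R -> R -> R) : Prop :=
  jcont f /\
  (forall x y, ex_derive (fun a => f a y) x /\ ex_derive (fun b => f x b) y) /\
  jcont (dx f) /\ jcont (dy f).

(* w is (the C^1 representative of) an element of V^3:
   periodic, divergence free, mean zero, finite H^3 seminorm *)
Definition in_V3 (w : field) : Prop :=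
  periodic (comp1 w) /\ periodic (comp2 w) /\
  C1 (comp1 w) /\ C1 (comp2 w) /\
  (forall x y, dx (comp1 w) x y + dy (comp2 w) x y = 0) /\
  dint (comp1 w) = 0 /\ dint (comp2 w) = 0 /\
  (exists C, forall N, H3_partial w N <= C).

Definition cont_V3 (u : flow) : Prop :=
  forall t, 0 <= t -> forall eps, 0 < eps -> exists delta, 0 < delta /\
    forall s, 0 <= s -> Rabs (s - t) < delta ->
      forall N, H3_partial (fsub (u s) (u t)) N <= eps.

Definition euler_solution (u : flow) : Prop :=
  (forall t, 0 <= t -> in_V3 (u t)) /\ cont_V3 u /\
  exists p : sflow,
    forall t, 0 < t -> forall x y,
      ex_derive (fun s => comp1 (u s) x y) t /\
      ex_derive (fun s => comp2 (u s) x y) t /\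
      ex_derive (fun a => p t a y) x /\ ex_derive (fun b => p t x b) y /\
      Derive (fun s => comp1 (u s) x y) t
        + comp1 (u t) x y * dx (comp1 (u t)) x y
        + comp2 (u t) x y * dy (comp1 (u t)) x y
        = - dx (p t) x y /\
      Derive (fun s => comp2 (u s) x y) t
        + comp1 (u t) x y * dx (comp2 (u t)) x y
        + comp2 (u t) x y * dy (comp2 (u t)) x y
        = - dy (p t) x y.

Definition determining_modes (M : nat) : Prop :=
  forall u1 u2 : flow, euler_solution u1 -> euler_solution u2 ->
    is_lim (fun t => Hnorm (PM M (fsub (u1 t) (u2 t)))) p_infty 0 ->
    is_lim (fun t => Hnorm (fsub (u1 t) (u2 t))) p_infty 0.

(* Main.v *)
Require Import Defs.
From Stdlib Require Import Reals ZArith List Lra Lia FinFun.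
From Coquelicot Require Import Coquelicot.
Open Scope R_scope.

Lemma per_Z (j : Z) (phi : R) :
  cos (phi + 2 * IZR j * PI) = cos phi /\ sin (phi + 2 * IZR j * PI) = sin phi.
Proof.
  destruct j as [|p|p].
  - simpl. replace (phi + 2 * 0 * PI) with phi by ring. auto.
  - rewrite <- (positive_nat_Z p), <- INR_IZR_INZ. split; [apply cos_period|apply sin_period].
  - change (IZR (Zneg p)) with (- IZR (Zpos p))%R.
    rewrite <- (positive_nat_Z p), <- INR_IZR_INZ.
    set (n := Pos.to_nat p).
    rewrite <- (cos_period (phi + 2 * - INR n * PI) n).
    rewrite <- (sin_period (phi + 2 * - INR n * PI) n).
    replace (phi + 2 * - INR n * PI + 2 * INR n * PI) with phi by ring. auto.
Qed.

Lemma ex_sin (j : Z) (phi a b : R) : ex_RInt (fun x => sin (IZR j * x + phi)) a b.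
Proof.
  apply (@ex_RInt_continuous R_CompleteNormedModule); intros z _. apply (@ex_derive_continuous R_AbsRing R_NormedModule). auto_derive. auto.
Qed.
Lemma ex_cos (j : Z) (phi a b : R) : ex_RInt (fun x => cos (IZR j * x + phi)) a b.
Proof.
  apply (@ex_RInt_continuous R_CompleteNormedModule); intros z _. apply (@ex_derive_continuous R_AbsRing R_NormedModule). auto_derive. auto.
Qed.

Lemma RInt_cst (c a b : R) : RInt (fun _ => c) a b = (b - a) * c.
Proof. rewrite RInt_const. reflexivity. Qed.

Lemma Is_val (j : Z) (phi : R) :
  RInt (fun b => sin (IZR j * b + phi)) 0 (2 * PI) =
  if Z.eqb j 0 then 2 * PI * sin phi else 0.
Proof.
  destruct (Z.eqb_spec j 0) as [->|Hj].
  - rewrite (RInt_ext _ (fun _ => sin phi)). rewrite RInt_cst, Rminus_0_r. reflexivity.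
    intros x _. f_equal. simpl. ring.
  - assert (Hj' : IZR j <> 0) by (apply not_0_IZR; auto).
    assert (HI := @is_RInt_derive R_CompleteNormedModule (fun b => - cos (IZR j * b + phi) / IZR j)
                    (fun b => sin (IZR j * b + phi)) 0 (2 * PI)
                    ltac:(intros x _; auto_derive; [auto|field; auto])
                    ltac:(intros x _; apply (@ex_derive_continuous R_AbsRing R_NormedModule); auto_derive; auto)).
    apply is_RInt_unique in HI. rewrite HI.
    unfold minus, plus, opp; simpl.
    replace (IZR j * (2 * PI) + phi) with (phi + 2 * IZR j * PI) by ring.
    rewrite (proj1 (per_Z j phi)). replace (IZR j * 0 + phi) with phi by ring. field. auto.
Qed.

Lemma Ic_val (j : Z) (phi : R) :
  RInt (fun b => cos (IZR j * b + phi)) 0 (2 * PI) =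
  if Z.eqb j 0 then 2 * PI * cos phi else 0.
Proof.
  destruct (Z.eqb_spec j 0) as [->|Hj].
  - rewrite (RInt_ext _ (fun _ => cos phi)). rewrite RInt_cst, Rminus_0_r. reflexivity.
    intros x _. f_equal. simpl. ring.
  - assert (Hj' : IZR j <> 0) by (apply not_0_IZR; auto).
    assert (HI := @is_RInt_derive R_CompleteNormedModule (fun b => sin (IZR j * b + phi) / IZR j)
                    (fun b => cos (IZR j * b + phi)) 0 (2 * PI)
                    ltac:(intros x _; auto_derive; [auto|field; auto])
                    ltac:(intros x _; apply (@ex_derive_continuous R_AbsRing R_NormedModule); auto_derive; auto)).
    apply is_RInt_unique in HI. rewrite HI.
    unfold minus, plus, opp; simpl.
    replace (IZR j * (2 * PI) + phi) with (phi + 2 * IZR j * PI) by ring.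
    rewrite (proj2 (per_Z j phi)). replace (IZR j * 0 + phi) with phi by ring. field. auto.
Qed.

Lemma RInt_lin (f g : R -> R) a b c d :
  ex_RInt f a b -> ex_RInt g a b ->
  RInt (fun x => c * f x + d * g x) a b = c * RInt f a b + d * RInt g a b.
Proof.
  intros Hf Hg.
  assert (H1 := @RInt_plus R_CompleteNormedModule (fun x => scal c (f x)) (fun x => scal d (g x)) a b
     (ex_RInt_scal f a b c Hf) (ex_RInt_scal g a b d Hg)).
  assert (H2 := RInt_scal f a b c Hf). assert (H3 := RInt_scal g a b d Hg).
  transitivity (RInt (fun x => c * f x) a b + RInt (fun x => d * g x) a b).
  { exact H1. }
  f_equal; [exact H2 | exact H3].
Qed.

Lemma RInt_extR (f g : R -> R) a b : (forall x, Rmin a b < x < Rmax a b -> f x = g x) ->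
  RInt f a b = RInt g a b.
Proof. apply RInt_ext. Qed.

Lemma SC (k m : Z) (th : R) :
  RInt (fun b => sin (IZR k * b) * cos (th + IZR m * b)) 0 (2 * PI) =
  / 2 * (if Z.eqb (k + m) 0 then 2 * PI * sin th else 0) +
  / 2 * (if Z.eqb (k - m) 0 then 2 * PI * sin (- th) else 0).
Proof.
  rewrite (RInt_extR _ (fun b => / 2 * sin (IZR (k + m) * b + th) + / 2 * sin (IZR (k - m) * b + - th))).
  - rewrite RInt_lin by apply ex_sin. rewrite !Is_val. reflexivity.
  - intros b _. rewrite plus_IZR, minus_IZR.
    replace ((IZR k + IZR m) * b + th) with (IZR k * b + (th + IZR m * b)) by ring.
    replace ((IZR k - IZR m) * b + - th) with (IZR k * b - (th + IZR m * b)) by ring.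
    rewrite sin_plus, sin_minus. field.
Qed.

Lemma SS (k m : Z) (th : R) :
  RInt (fun b => sin (IZR k * b) * sin (th + IZR m * b)) 0 (2 * PI) =
  / 2 * (if Z.eqb (k - m) 0 then 2 * PI * cos (- th) else 0) +
  (- / 2) * (if Z.eqb (k + m) 0 then 2 * PI * cos th else 0).
Proof.
  rewrite (RInt_extR _ (fun b => / 2 * cos (IZR (k - m) * b + - th) + (- / 2) * cos (IZR (k + m) * b + th))).
  - rewrite RInt_lin by apply ex_cos. rewrite !Ic_val. reflexivity.
  - intros b _. rewrite plus_IZR, minus_IZR.
    replace ((IZR k + IZR m) * b + th) with (IZR k * b + (th + IZR m * b)) by ring.
    replace ((IZR k - IZR m) * b + - th) with (IZR k * b - (th + IZR m * b)) by ring.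
    rewrite cos_plus, cos_minus. field.
Qed.

Lemma dint_ext (f g : R -> R -> R) : (forall x y, f x y = g x y) -> dint f = dint g.
Proof.
  intros H. unfold dint. apply RInt_ext. intros x _. apply RInt_ext. intros y _. apply H.
Qed.

Lemma RInt0 (f : R -> R) a b : (forall x, f x = 0) -> RInt f a b = 0.
Proof.
  intros H. rewrite (RInt_extR _ (fun _ => 0)). rewrite RInt_cst. apply Rmult_0_r.
  intros; apply H.
Qed.

Lemma dint_zero (f : R -> R -> R) : (forall x y, f x y = 0) -> dint f = 0.
Proof.
  intros H. unfold dint. apply RInt0. intros x. apply RInt0. intros y. apply H.
Qed.

Lemma D_cos (k n1 n2 : Z) :
  dint (fun x y => sin (IZR k * y) * cos (IZR n1 * x + IZR n2 * y)) = 0.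
Proof.
  unfold dint.
  set (A := / 2 * (if Z.eqb (k + n2) 0 then 2 * PI else 0)).
  set (B := - / 2 * (if Z.eqb (k - n2) 0 then 2 * PI else 0)).
  rewrite (RInt_extR _ (fun x => A * sin (IZR n1 * x + 0) + B * sin (IZR n1 * x + 0))).
  - rewrite RInt_lin by apply ex_sin. rewrite !Is_val, sin_0.
    destruct (Z.eqb n1 0); ring.
  - intros x _. rewrite SC. rewrite sin_neg, Rplus_0_r. unfold A, B.
    destruct (Z.eqb (k + n2) 0); destruct (Z.eqb (k - n2) 0); ring.
Qed.

Lemma D_sin (k n1 n2 : Z) :
  (n1 <> 0 \/ (Z.eqb (k - n2) 0 = false /\ Z.eqb (k + n2) 0 = false))%Z ->
  dint (fun x y => sin (IZR k * y) * sin (IZR n1 * x + IZR n2 * y)) = 0.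
Proof.
  intros Hc. unfold dint.
  set (A := / 2 * (if Z.eqb (k - n2) 0 then 2 * PI else 0)).
  set (B := - / 2 * (if Z.eqb (k + n2) 0 then 2 * PI else 0)).
  rewrite (RInt_extR _ (fun x => A * cos (IZR n1 * x + 0) + B * cos (IZR n1 * x + 0))).
  - rewrite RInt_lin by apply ex_cos. rewrite !Ic_val.
    destruct Hc as [Hn | [H1 H2]].
    + apply Z.eqb_neq in Hn. rewrite Hn. ring.
    + unfold A, B. rewrite H1, H2. ring.
  - intros x _. rewrite SS. rewrite cos_neg, Rplus_0_r. unfold A, B.
    destruct (Z.eqb (k + n2) 0); destruct (Z.eqb (k - n2) 0); ring.
Qed.

Definition lsum (l : list Z) (g : Z -> R) : R := fold_right Rplus 0 (map g l).

Lemma lsum_zero l g : (forall z, In z l -> g z = 0) -> lsum l g = 0.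
Proof.
  induction l as [|z l IH]; intros H. reflexivity.
  change (g z + lsum l g = 0). rewrite IH, H; simpl; auto. ring. intros; apply H; simpl; auto.
Qed.

Lemma lsum_one l g b : NoDup l -> (forall z, 0 <= g z) ->
  (forall z, In z l -> z <> b -> g z = 0) -> lsum l g <= g b.
Proof.
  induction l as [|z l IH]; intros Hn Hg H; change (lsum (z :: l) g) with (g z + lsum l g) || change (lsum nil g) with 0.
  - apply Hg.
  - apply NoDup_cons_iff in Hn. destruct Hn as [Hz Hn].
    destruct (Z.eq_dec z b) as [->|Hzb].
    +  rewrite lsum_zero. lra.
      intros z' Hz'. apply H. simpl; auto. intros ->. contradiction.
    + rewrite H by (simpl; auto). 
      assert (lsum l g <= g b) by (apply IH; auto; intros; apply H; simpl; auto). lra.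
Qed.

Lemma lsum_two l g a b : NoDup l -> (forall z, 0 <= g z) ->
  (forall z, In z l -> z <> a -> z <> b -> g z = 0) -> lsum l g <= g a + g b.
Proof.
  induction l as [|z l IH]; intros Hn Hg H; change (lsum (z :: l) g) with (g z + lsum l g) || change (lsum nil g) with 0.
  - pose proof (Hg a); pose proof (Hg b); lra.
  - apply NoDup_cons_iff in Hn. destruct Hn as [Hz Hn]. 
    destruct (Z.eq_dec z a) as [->|Hza].
    + assert (lsum l g <= g b).
      { apply lsum_one; auto. intros z' Hz' Hb. apply H. simpl; auto.
        intros ->. contradiction. auto. }
      lra.
    + destruct (Z.eq_dec z b) as [->|Hzb].
      * assert (lsum l g <= g a).
        { apply lsum_one; auto. intros z' Hz' Ha. apply H. simpl; auto. auto.
          intros ->. contradiction. }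
        lra.
      * rewrite H by (simpl; auto).
        assert (lsum l g <= g a + g b) by (apply IH; auto; intros; apply H; simpl; auto). lra.
Qed.

Lemma lsum_nonneg l g : (forall z, 0 <= g z) -> 0 <= lsum l g.
Proof.
  induction l as [|z l IH]; intros Hg. change (lsum nil g) with 0; lra. change (lsum (z :: l) g) with (g z + lsum l g).
  pose proof (Hg z); pose proof (IH Hg); lra.
Qed.

Lemma Zbox_NoDup N : NoDup (Zbox N).
Proof.
  unfold Zbox. apply Injective_map_NoDup. intros x y Hxy. lia. apply seq_NoDup.
Qed.

Lemma sum_box_lsum N F : sum_box N F = lsum (Zbox N) (fun n1 => lsum (Zbox N) (fun n2 => F n1 n2)).
Proof. reflexivity. Qed.

Definition wsin (k : Z) : field := fun x y => (sin (IZR k * y), 0).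
Definition w0 : field := fun x y => (0, 0).

Lemma jcont_y (h : R -> R) : (forall y, continuous h y) -> jcont (fun x y => h y).
Proof.
  intros H x y. apply (continuous_comp snd h). apply continuous_snd. apply H.
Qed.

Lemma jcont_ext (f g : R -> R -> R) : (forall x y, f x y = g x y) -> jcont g -> jcont f.
Proof.
  intros E H x y. apply (continuous_ext (fun q : R * R => g (fst q) (snd q))).
  intros; rewrite E; auto. apply H.
Qed.

Lemma fc_sq_zero f n1 n2 : (forall x y, f x y = 0) -> fc_sq f n1 n2 = 0.
Proof.
  intros H. unfold fc_sq. rewrite !dint_zero. field. apply PI_neq0.
  intros; rewrite H; ring. intros; rewrite H; ring.
Qed.

Lemma H3_zero w N : (forall x y, comp1 w x y = 0) -> (forall x y, comp2 w x y = 0) ->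
  H3_partial w N = 0.
Proof.
  intros H1 H2. unfold H3_partial. rewrite sum_box_lsum. apply lsum_zero. intros.
  apply lsum_zero. intros. rewrite !fc_sq_zero; auto. ring.
Qed.

Lemma fc_sq_nonneg f n1 n2 : 0 <= fc_sq f n1 n2.
Proof.
  unfold fc_sq. apply Rmult_le_pos.
  apply Rplus_le_le_0_compat; apply pow2_ge_0.
  apply Rlt_le, Rinv_0_lt_compat. apply pow_lt. apply Rmult_lt_0_compat. lra.
  apply pow_lt, PI_RGT_0.
Qed.

Lemma fc_sin_zero k n1 n2 :
  (n1 <> 0 \/ (Z.eqb (k - n2) 0 = false /\ Z.eqb (k + n2) 0 = false))%Z ->
  fc_sq (comp1 (wsin k)) n1 n2 = 0.
Proof.
  intros Hc. unfold fc_sq.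
  rewrite (dint_ext (fun x y => comp1 (wsin k) x y * cos (IZR n1 * x + IZR n2 * y)) (fun x y => sin (IZR k * y) * cos (IZR n1 * x + IZR n2 * y))) by reflexivity.
  rewrite (dint_ext (fun x y => comp1 (wsin k) x y * sin (IZR n1 * x + IZR n2 * y)) (fun x y => sin (IZR k * y) * sin (IZR n1 * x + IZR n2 * y))) by reflexivity.
  rewrite D_cos, D_sin by auto. unfold Rdiv. ring.
Qed.

Lemma H3_sin_bound k : exists C, forall N, H3_partial (wsin k) N <= C.
Proof.
  set (F := fun n1 n2 => (IZR (n1 * n1 + n2 * n2)) ^ 3 *
      (fc_sq (comp1 (wsin k)) n1 n2 + fc_sq (comp2 (wsin k)) n1 n2)).
  assert (Fnn : forall n1 n2, 0 <= F n1 n2).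
  { intros. unfold F. apply Rmult_le_pos. apply pow_le. apply IZR_le. nia.
    pose proof (fc_sq_nonneg (comp1 (wsin k)) n1 n2).
    pose proof (fc_sq_nonneg (comp2 (wsin k)) n1 n2). lra. }
  assert (Fz : forall n1 n2, (n1 <> 0 \/ (Z.eqb (k - n2) 0 = false /\ Z.eqb (k + n2) 0 = false))%Z ->
     F n1 n2 = 0).
  { intros n1 n2 Hc. unfold F. rewrite fc_sin_zero by auto.
    rewrite fc_sq_zero. ring. intros; reflexivity. }
  exists (2 * (F 0%Z k + F 0%Z (- k)%Z)).
  intros N. unfold H3_partial. rewrite sum_box_lsum. fold F.
  set (G := fun n1 => lsum (Zbox N) (fun n2 => F n1 n2)).
  change (lsum (Zbox N) G <= 2 * (F 0%Z k + F 0%Z (- k)%Z)).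
  assert (HG : forall n1, 0 <= G n1) by (intros; apply lsum_nonneg; auto).
  assert (H1 : lsum (Zbox N) G <= G 0%Z + G 0%Z).
  { apply lsum_two; auto. apply Zbox_NoDup. intros z _ Hz _. unfold G.
    apply lsum_zero. intros. apply Fz. auto. }
  assert (H2 : G 0%Z <= F 0%Z k + F 0%Z (- k)%Z).
  { unfold G. apply (lsum_two _ (fun n2 => F 0%Z n2)); auto. apply Zbox_NoDup.
    intros z _ Ha Hb. apply Fz. right. split; apply Z.eqb_neq; lia. }
  lra.
Qed.

Lemma cont_const (c : R) y : continuous (fun _ : R => c) y.
Proof. apply continuous_const. Qed.

Lemma C1_zero : Defs.C1 (fun _ _ : R => 0).
Proof.
  split; [|split; [|split]].
  - apply (jcont_y (fun _ => 0)). intros; apply cont_const.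
  - intros; split; apply ex_derive_const.
  - apply (jcont_ext _ (fun _ _ : R => 0)). intros; unfold dx; apply Derive_const.
    apply (jcont_y (fun _ => 0)). intros; apply cont_const.
  - apply (jcont_ext _ (fun _ _ : R => 0)). intros; unfold dy; apply Derive_const.
    apply (jcont_y (fun _ => 0)). intros; apply cont_const.
Qed.

Lemma in_V3_w0 : in_V3 w0.
Proof.
  unfold in_V3. split; [|split; [|split; [|split; [|split; [|split; [|split]]]]]].
  - intros x y; split; reflexivity.
  - intros x y; split; reflexivity.
  - apply C1_zero.
  - apply C1_zero.
  - intros. unfold dx, dy, comp1, comp2, w0; cbn [fst snd]. rewrite !Derive_const. ring.
  - apply dint_zero; reflexivity.
  - apply dint_zero; reflexivity.
  - exists 0. intros. rewrite H3_zero; [lra | reflexivity | reflexivity].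
Qed.

Lemma in_V3_wsin (k : Z) : in_V3 (wsin k).
Proof.
  unfold in_V3. split; [|split; [|split; [|split; [|split; [|split; [|split]]]]]].
  - intros x y; split; [reflexivity|]. unfold comp1, wsin; simpl.
    replace (IZR k * (y + 2 * PI)) with (IZR k * y + 2 * IZR k * PI) by ring.
    apply (proj2 (per_Z k _)).
  - intros x y; split; reflexivity.
  - split; [|split; [|split]].
    + apply (jcont_y (fun y => sin (IZR k * y))). intros y.
      apply (@ex_derive_continuous R_AbsRing R_NormedModule). auto_derive. auto.
    + intros x y. unfold comp1, wsin; cbn [fst snd]. split. apply ex_derive_const.
      auto_derive. auto.
    + apply (jcont_ext _ (fun _ _ : R => 0)). intros; unfold dx, comp1, wsin; cbn [fst snd]; apply Derive_const.
      apply (jcont_y (fun _ => 0)). intros; apply cont_const.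
    + apply (jcont_ext _ (fun _ y => IZR k * cos (IZR k * y))).
      intros x y. unfold dy. apply is_derive_unique. unfold comp1, wsin; simpl.
      auto_derive. auto. ring.
      apply (jcont_y (fun y => IZR k * cos (IZR k * y))). intros y.
      apply (@ex_derive_continuous R_AbsRing R_NormedModule). auto_derive. auto.
  - apply C1_zero.
  - intros. unfold dx, dy, comp1, comp2, wsin; cbn [fst snd]. rewrite !Derive_const. ring.
  - unfold dint. apply RInt0. intros x.
    rewrite (RInt_extR _ (fun y => sin (IZR k * y + 0))).
    rewrite Is_val, sin_0. destruct (Z.eqb k 0); ring.
    intros; unfold comp1, wsin; simpl. rewrite Rplus_0_r. reflexivity.
  - apply dint_zero; reflexivity.
  - apply H3_sin_bound.
Qed.

Lemma euler_stat (w : field) : in_V3 w ->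
  (forall x y, dx (comp1 w) x y = 0) -> (forall x y, comp2 w x y = 0) ->
  (forall x y, dx (comp2 w) x y = 0) -> (forall x y, dy (comp2 w) x y = 0) ->
  euler_solution (fun _ => w).
Proof.
  intros Hw H1 H2 H3 H4. split; [|split].
  - intros; auto.
  - intros t _ eps Heps. exists 1. split. lra. intros s _ _ N.
    rewrite H3_zero. lra. intros; unfold comp1, fsub; simpl; ring.
    intros; unfold comp2, fsub; simpl; ring.
  - exists (fun _ _ _ => 0). intros t _ x y.
    split; [apply ex_derive_const|].
    split; [apply ex_derive_const|].
    split; [apply ex_derive_const|].
    split; [apply ex_derive_const|].
    cbv beta. rewrite !Derive_const.
    assert (E1 : dx (fun _ _ : R => 0) x y = 0) by (unfold dx; apply Derive_const).
    assert (E2 : dy (fun _ _ : R => 0) x y = 0) by (unfold dy; apply Derive_const).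
    rewrite E1, E2, H1, H2, H3, H4. split; ring.
Qed.

Lemma PM_zero1 M x y :
  PM_scalar M (comp1 (fsub (wsin (Z.of_nat (S M))) w0)) x y = 0.
Proof.
  set (k := Z.of_nat (S M)).
  unfold PM_scalar. rewrite sum_box_lsum. apply lsum_zero; intros n1 _.
  apply lsum_zero; intros n2 _.
  destruct (_ && _)%bool eqn:E; [|reflexivity].
  apply andb_prop in E; destruct E as [_ E]. apply Z.leb_le in E.
  unfold dint. rewrite RInt0. ring. intros a.
  rewrite (RInt_extR _ (fun b => sin (IZR k * b) *
        cos ((IZR n1 * (x - a) + IZR n2 * y) + IZR (- n2) * b))).
  - rewrite SC.
    assert (Hk : k = (Z.of_nat M + 1)%Z) by (unfold k; lia).
    replace (Z.eqb (k + - n2) 0) with false by (symmetry; apply Z.eqb_neq; nia).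
    replace (Z.eqb (k - - n2) 0) with false by (symmetry; apply Z.eqb_neq; nia).
    ring.
  - intros b _. unfold comp1, fsub, wsin, w0; cbn [fst snd]. rewrite opp_IZR.
    replace (IZR n1 * (x - a) + IZR n2 * (y - b)) with
      (IZR n1 * (x - a) + IZR n2 * y + - IZR n2 * b) by ring. ring.
Qed.

Lemma PM_zero2 M k x y :
  PM_scalar M (comp2 (fsub (wsin k) w0)) x y = 0.
Proof.
  unfold PM_scalar. rewrite sum_box_lsum. apply lsum_zero; intros n1 _.
  apply lsum_zero; intros n2 _.
  destruct (_ && _)%bool; [|reflexivity].
  rewrite dint_zero. ring. intros a b. unfold comp2, fsub, wsin, w0; cbn [fst snd]. ring.
Qed.

Lemma Hnorm_PM M t :
  Hnorm (PM M (fsub ((fun _ : R => wsin (Z.of_nat (S M))) t) ((fun _ : R => w0) t))) = 0.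
Proof.
  unfold Hnorm. rewrite dint_zero. apply sqrt_0.
  intros x y. unfold comp1 at 1, comp2 at 1, PM; cbn [fst snd].
  rewrite PM_zero1, PM_zero2. ring.
Qed.

Lemma Hnorm_diff (k : Z) : k <> 0%Z ->
  Hnorm (fsub (wsin k) w0) = sqrt (2 * PI * PI).
Proof.
  intros Hk. unfold Hnorm, dint.
  rewrite (RInt_extR _ (fun _ => PI)).
  - rewrite RInt_cst. change (sqrt ((2 * PI - 0) * PI) = sqrt (2 * PI * PI)). f_equal. ring.
  - intros x _.
    rewrite (RInt_extR _ (fun y => / 2 * cos (IZR 0 * y + 0) + (- / 2) * cos (IZR (2 * k) * y + 0))).
    + rewrite RInt_lin by apply ex_cos. rewrite !Ic_val.
      replace (Z.eqb (2 * k) 0) with false by (symmetry; apply Z.eqb_neq; lia).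
      simpl Z.eqb. cbv iota. rewrite cos_0. field.
    + intros y _. unfold comp1, comp2, fsub, wsin, w0; cbn [fst snd].
      rewrite mult_IZR.
      replace (IZR 2 * IZR k * y + 0) with (2 * (IZR k * y)) by ring.
      replace (IZR 0 * y + 0) with 0 by ring.
      rewrite cos_0, cos_2a_sin. change RinvImpl.Rinv with Rinv. field.
Qed.

Theorem theorem4p4 : ~ (exists M : nat, (0 < M)%nat /\ determining_modes M).
Proof.
  intros [M [_ HD]].
  set (k := Z.of_nat (S M)).
  assert (Hk : k <> 0%Z) by (unfold k; lia).
  assert (S1 : euler_solution (fun _ => wsin k)).
  { apply euler_stat. apply in_V3_wsin.
    - intros; unfold dx, comp1, wsin; cbn [fst snd]; apply Derive_const.
    - intros; reflexivity.
    - intros; unfold dx, comp2, wsin; cbn [fst snd]; apply Derive_const.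
    - intros; unfold dy, comp2, wsin; cbn [fst snd]; apply Derive_const. }
  assert (S2 : euler_solution (fun _ => w0)).
  { apply euler_stat. apply in_V3_w0.
    - intros; unfold dx, comp1, w0; cbn [fst snd]; apply Derive_const.
    - intros; reflexivity.
    - intros; unfold dx, comp2, w0; cbn [fst snd]; apply Derive_const.
    - intros; unfold dy, comp2, w0; cbn [fst snd]; apply Derive_const. }
  specialize (HD _ _ S1 S2).
  assert (L : is_lim (fun t => Hnorm (fsub ((fun _ : R => wsin k) t) ((fun _ : R => w0) t))) p_infty 0).
  { apply HD. apply (is_lim_ext (fun _ => 0)). intros t. symmetry. apply (Hnorm_PM M t).
    exact (is_lim_const 0 p_infty). }
  apply (is_lim_ext _ (fun _ => sqrt (2 * PI * PI))) in L.
  2: { intros t. cbv beta. apply Hnorm_diff; auto. }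
  apply is_lim_unique in L. rewrite Lim_const in L. injection L as L.
  assert (0 < sqrt (2 * PI * PI)).
  { apply sqrt_lt_R0. pose proof PI_RGT_0. nra. }
  lra.
Qed.
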